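(* Let $G_1=(V_1,E_1)$ and $G_2=(V_2,E_2)$ be bispanning graphs on disjoint vertex and edge sets, let $d_1\in E_1$ have ends $x_1,y_1$ and $d_2\in E_2$ have ends $x_2,y_2$, and let $\sigma:\{x_1,y_1\}\to\{x_2,y_2\}$ be a bijection. Then the graph obtained from the disjoint union of $G_1$ and $G_2$ by identifying $x_1$ with $\sigma(x_1)$ and $y_1$ with $\sigma(y_1)$ and then deleting $d_1$ and $d_2$ (the $2$-clique sum with no remaining clique edges) is bispanning.
   Context: Graphs are finite, undirected, may have parallel edges, no loops. A spanning tree of $G=(V,E)$ is $T\subseteq E$ with $(V,T)$ connected and acyclic; $G$ is bispanning if $E$ is the union of two disjoint spanning trees. *)

(* Defs.v *)
From mathcomp Require Import all_boot.
Set Implicit Arguments. Unset Strict Implicit. Unset Printing Implicit Defensive.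

Section Multigraph.
Variables (V E : finType) (ends : E -> V * V).

Definition joins (e : E) (u v : V) : bool :=
  (((ends e).1 == u) && ((ends e).2 == v)) || (((ends e).1 == v) && ((ends e).2 == u)).

Definition loopless : Prop := forall e, (ends e).1 != (ends e).2.

Definition adjF (F : {set E}) : rel V := fun u v => [exists e in F, joins e u v].

Definition connectedF (F : {set E}) : Prop := forall u v : V, connect (adjF F) u v.

(* a cycle in (V, F): distinct vertices p = [v_0;..;v_{k-1}], distinct edges
   s = [e_0;..;e_{k-1}] of F, k >= 1, with e_i joining v_i and v_{i+1 mod k} *)
Definition is_cycle (F : {set E}) (p : seq V) (s : seq E) : Prop :=
  [/\ 0 < size s, size p = size s, uniq s && uniq p, all (fun e => e \in F) s &
      all (fun t => joins t.1 t.2.1 t.2.2) (zip s (zip p (rot 1 p)))].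

Definition acyclicF (F : {set E}) : Prop := ~ exists p s, is_cycle F p s.

Definition spanning_tree (T : {set E}) : Prop := connectedF T /\ acyclicF T.

Definition bispanning : Prop :=
  exists T1 T2 : {set E},
    [/\ [disjoint T1 & T2], T1 :|: T2 = [set: E], spanning_tree T1 & spanning_tree T2].

End Multigraph.

Section CliqueSum.
Variables (V1 E1 V2 E2 : finType) (ends1 : E1 -> V1 * V1) (ends2 : E2 -> V2 * V2)
          (d1 : E1) (d2 : E2) (sigma : V1 -> V2).

Definition x1 := (ends1 d1).1.
Definition y1 := (ends1 d1).2.
Definition x2 := (ends2 d2).1.
Definition y2 := (ends2 d2).2.

(* vertices: V1 together with the vertices of V2 other than x2, y2
   (x2, y2 are identified with sigma^-1 of them in V1) *)
Definition csum_V : finType := (V1 + {v : V2 | v \notin [:: x2; y2]})%type.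
Definition csum_E : finType := ({e : E1 | e != d1} + {e : E2 | e != d2})%type.

Definition glue2 (v : V2) : csum_V :=
  if v == sigma x1 then inl x1
  else if v == sigma y1 then inl y1
  else match insub v with Some u => inr u | None => inl x1 end.

Definition csum_ends (e : csum_E) : csum_V * csum_V :=
  match e with
  | inl e => (inl (ends1 (val e)).1, inl (ends1 (val e)).2)
  | inr e => (glue2 (ends2 (val e)).1, glue2 (ends2 (val e)).2)
  end.

End CliqueSum.

Arguments csum_ends {V1 E1 V2 E2} ends1 ends2 d1 d2 sigma e.

(* Main.v *)
Require Import Defs.
From mathcomp Require Import all_boot.
Set Implicit Arguments. Unset Strict Implicit. Unset Printing Implicit Defensive.

Section G.
Variables (V E : finType) (ends : E -> V * V).

Definition closedF (F : {set E}) (s : V -> bool) :=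
  forall e, e \in F -> s (ends e).1 = s (ends e).2.

Lemma joins_closed F s e u v : closedF F s -> e \in F -> joins ends e u v -> s u = s v.
Proof.
move=> Hc He; rewrite /joins => /orP[/andP[/eqP<- /eqP<-]|/andP[/eqP<- /eqP<-]];
  by rewrite (Hc e He).
Qed.

Lemma adj_closed F s u v : closedF F s -> adjF ends F u v -> s u = s v.
Proof. move=> Hc; rewrite /adjF => /existsP[e /andP[He Hj]]; exact: joins_closed Hc He Hj. Qed.

Lemma closed_connect F s u v : closedF F s -> connect (adjF ends F) u v -> s u = s v.
Proof.
move=> Hc /connectP[p Hp ->]; elim: p u Hp => [|w p IH] u //= /andP[Ha Hp].
by rewrite (adj_closed Hc Ha) IH.
Qed.

Lemma comp_closed F u : closedF F (fun v => connect (adjF ends F) u v).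
Proof.
move=> e He /=.
have H12 : adjF ends F (ends e).1 (ends e).2.
  by apply/existsP; exists e; rewrite He /joins !eqxx.
have H21 : adjF ends F (ends e).2 (ends e).1.
  by apply/existsP; exists e; rewrite He /joins !eqxx orbT.
by apply/idP/idP => H; apply: connect_trans H (connect1 _).
Qed.

Lemma connectedP F : connectedF ends F <-> forall s, closedF F s -> forall u v, s u = s v.
Proof.
split; first by move=> Hc s Hs u v; exact: closed_connect Hs (Hc u v).
move=> H u v; have := H _ (@comp_closed F u) u v.
by rewrite connect0 => <-.
Qed.

Lemma closedS (F G : {set E}) s : F \subset G -> closedF G s -> closedF F s.
Proof. by move=> /subsetP HFG Hc e He; apply: Hc; apply: HFG. Qed.

Lemma chain_closed (F : {set E}) s (x y : V) q r : closedF F s -> all (fun f => f \in F) r ->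
  size r = (size q).+1 ->
  all (fun t => joins ends t.1 t.2.1 t.2.2) (zip r (zip (x :: q) (rcons q y))) -> s x = s y.
Proof.
move=> Hc; elim: q x r => [|z q IH] x [|f r] //=.
  by move=> /andP[Hf _] _ /andP[Hj _]; exact: joins_closed Hc Hf Hj.
move=> /andP[Hf Hr] [Hsz] /andP[Hj Hrest].
by rewrite (joins_closed Hc Hf Hj); apply: IH Hr Hsz Hrest.
Qed.

Lemma sep_acyclic (F : {set E}) :
  (forall e, e \in F -> exists s, closedF (F :\ e) s /\ s (ends e).1 != s (ends e).2) ->
  acyclicF ends F.
Proof.
move=> H [p [s [Hsz Hps /andP[Hus Hup] Hall Hj]]].
case: s Hsz Hps Hus Hall Hj => [|e s] //= _.
case: p Hup => [|a q] //= Hup [Hsz] /andP[Hes Hus] /andP[HeF HallF].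
have [t [Htc Htn]] := H e HeF.
rewrite rot1_cons.
case: q Hup Hsz => [|b q] /= Hup Hsz.
  move=> /andP[Hj _]; move: Htn Hj; rewrite /joins orbb => /negP Htn /andP[/eqP E1 /eqP E2].
  by apply: Htn; rewrite E1 E2.
move=> /andP[Hj Hrest].
have Hall' : all (fun f => f \in F :\ e) s.
  apply/allP => f Hf; rewrite !inE (allP HallF f Hf) andbT.
  by apply/eqP => Efe; rewrite -Efe Hf in Hes.
have Hba := chain_closed Htc Hall' (esym Hsz) Hrest.
move: Htn Hj; rewrite /joins => /negP Htn /orP[/andP[/eqP E1 /eqP E2]|/andP[/eqP E1 /eqP E2]];
  by apply: Htn; rewrite E1 E2 Hba.
Qed.

Lemma path_edges (F : {set E}) u p : path (adjF ends F) u p -> uniq (u :: p) ->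
  exists s, [/\ size s = size p, uniq s, all (fun f => f \in F) s,
    all (fun t => joins ends t.1 t.2.1 t.2.2) (zip s (zip (belast u p) p)) &
    all (fun f => ((ends f).1 \in u :: p) && ((ends f).2 \in u :: p)) s].
Proof.
elim: p u => [|y p IH] u /=; first by move=> _ _; exists [::].
move=> /andP[Hadj Hp] /andP[Hu Hup].
have [s [Hsz Hus HF Hj Hin]] := IH y Hp Hup.
move: Hadj; rewrite /adjF => /existsP[f /andP[Hf Hjf]].
have Hfe : ((ends f).1 \in [:: u, y & p]) && ((ends f).2 \in [:: u, y & p]).
  move: Hjf; rewrite /joins => /orP[/andP[/eqP-> /eqP->]|/andP[/eqP-> /eqP->]];
  by rewrite !inE !eqxx ?orbT.
exists (f :: s); split => //=.
- by rewrite Hsz.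
- rewrite Hus andbT; apply/negP => Hfs.
  have /andP[H1 H2] := allP Hin f Hfs.
  move: Hjf; rewrite /joins => /orP[/andP[/eqP E1 _]|/andP[_ /eqP E2]].
    by rewrite E1 (negbTE Hu) in H1.
  by rewrite E2 (negbTE Hu) in H2.
- by rewrite Hf HF.
- by rewrite Hjf Hj.
- rewrite Hfe /=; apply/allP => g Hg; have /andP[H1 H2] := allP Hin g Hg.
  by rewrite inE H1 inE H2 !orbT.
Qed.

Lemma acyclic_sep (F : {set E}) e : acyclicF ends F -> e \in F ->
  exists s, closedF (F :\ e) s /\ s (ends e).1 != s (ends e).2.
Proof.
move=> Hac He.
exists (fun v => connect (adjF ends (F :\ e)) (ends e).1 v); split; first exact: comp_closed.
rewrite /= connect0 /=; apply/negP => Hcon; apply: Hac.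
case: (eqVneq (ends e).1 (ends e).2) => Huv.
  exists [:: (ends e).1], [:: e]; split => //=; first by rewrite He.
  by rewrite /joins -Huv !eqxx.
case/connectP: Hcon => p Hp Hlast.
case/shortenP: Hp Hlast => p' Hp' Hu' _ Hlast.
have [s [Hsz Hus HF Hj _]] := path_edges Hp' Hu'.
exists ((ends e).1 :: p'), (rcons s e); split.
- by rewrite size_rcons.
- by rewrite size_rcons Hsz.
- rewrite rcons_uniq Hus Hu' andbT andbT.
  apply/negP => Hes; have := allP HF e Hes; by rewrite !inE eqxx.
- rewrite all_rcons He /=; apply/allP => f Hf; have := allP HF f Hf; rewrite !inE; by case/andP.
- rewrite rot1_cons [(ends e).1 :: p']lastI zip_rcons ?size_belast //.
  rewrite zip_rcons; last by rewrite size_zip size_belast Hsz minnn.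
  rewrite all_rcons Hj andbT /= -Hlast /joins !eqxx; by rewrite orbT.
Qed.

End G.

Section Glue.
Variables (V1 E1 V2 E2 : finType) (ends1 : E1 -> V1 * V1) (ends2 : E2 -> V2 * V2)
  (d1 : E1) (d2 : E2) (sigma : V1 -> V2).
Hypotheses (Hsx : sigma (ends1 d1).1 \in [:: (ends2 d2).1; (ends2 d2).2])
  (Hsy : sigma (ends1 d1).2 \in [:: (ends2 d2).1; (ends2 d2).2])
  (Hsinj : sigma (ends1 d1).1 != sigma (ends1 d1).2).

Notation VV := (csum_V V1 ends2 d2).
Notation EE := (csum_E d1 d2).
Notation G := (csum_ends ends1 ends2 d1 d2 sigma).
Notation gl := (glue2 ends1 ends2 d1 d2 sigma).

Definition gN (L : {set E1}) (R : {set E2}) : {set EE} :=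
  [set e : EE | match e with inl e => val e \in L | inr e => val e \in R end].

Definition sfun (s1 : V1 -> bool) (s2 : V2 -> bool) (x : VV) : bool :=
  match x with inl v => s1 v | inr w => s2 (val w) end.

Lemma in_x2y2 w : w \in [:: (ends2 d2).1; (ends2 d2).2] ->
  (w == sigma (ends1 d1).1) || (w == sigma (ends1 d1).2).
Proof.
move: Hsx Hsy Hsinj; rewrite !inE.
by case/orP=> /eqP-> /orP[]/eqP->; rewrite ?eqxx //= => _ /orP[]/eqP->; rewrite eqxx ?orbT.
Qed.

Lemma sig_eq (f : V2 -> bool) :
  (f (sigma (ends1 d1).1) == f (sigma (ends1 d1).2)) = (f (ends2 d2).1 == f (ends2 d2).2).
Proof.
move: Hsx Hsy Hsinj; rewrite !inE.
by case/orP=> /eqP-> /orP[]/eqP->; rewrite ?eqxx // eq_sym.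
Qed.

Lemma glue_x : gl (sigma (ends1 d1).1) = inl (ends1 d1).1.
Proof. by rewrite /glue2 /x1 eqxx. Qed.
Lemma glue_y : gl (sigma (ends1 d1).2) = inl (ends1 d1).2.
Proof. by rewrite /glue2 /x1 /y1 eq_sym (negbTE Hsinj) eqxx. Qed.
Lemma glue_inr w : gl (val w) = inr w.
Proof.
rewrite /glue2 /x1 /y1.
have Hw := valP w; case: ifP => [/eqP E|_].
  by move: Hw; rewrite E /x2 /y2 Hsx.
case: ifP => [/eqP E|_]; first by move: Hw; rewrite E /x2 /y2 Hsy.
by rewrite valK.
Qed.

Lemma sfun_glue s1 s2 : s1 (ends1 d1).1 = s2 (sigma (ends1 d1).1) ->
  s1 (ends1 d1).2 = s2 (sigma (ends1 d1).2) -> forall w, sfun s1 s2 (gl w) = s2 w.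
Proof.
move=> Ex Ey w.
case: (boolP (w \in [:: (ends2 d2).1; (ends2 d2).2])) => Hw.
  by case/orP: (in_x2y2 Hw) => /eqP->; rewrite ?glue_x ?glue_y.
have -> : w = val (Sub w Hw : {v : V2 | v \notin [:: x2 ends2 d2; y2 ends2 d2]}) by [].
by rewrite glue_inr.
Qed.

Lemma closed_lift L R s1 s2 :
  closedF ends1 (L :\ d1) s1 -> closedF ends2 (R :\ d2) s2 ->
  s1 (ends1 d1).1 = s2 (sigma (ends1 d1).1) ->
  s1 (ends1 d1).2 = s2 (sigma (ends1 d1).2) ->
  closedF G (gN L R) (sfun s1 s2).
Proof.
move=> H1 H2 Ex Ey [e|e]; rewrite inE /= => He.
  by apply: H1; rewrite !inE He (valP e).
rewrite !(sfun_glue Ex Ey); apply: H2; by rewrite !inE He (valP e).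
Qed.

Lemma closed_restr L R S : closedF G (gN L R) S ->
  closedF ends1 (L :\ d1) (fun v => S (inl v)) /\ closedF ends2 (R :\ d2) (fun w => S (gl w)).
Proof.
move=> Hc; split => e; rewrite !inE => /andP[Hne He].
  by have := Hc (inl (Sub e Hne)); rewrite inE /=; apply.
by have := Hc (inr (Sub e Hne)); rewrite inE /=; apply.
Qed.

Lemma gN_D1l L R (e : {e : E1 | e != d1}) : gN L R :\ inl e = gN (L :\ val e) R.
Proof.
apply/setP => [[f|f]]; rewrite !inE //=.
Qed.

Lemma gN_D1r L R (e : {e : E2 | e != d2}) : gN L R :\ inr e = gN L (R :\ val e).
Proof.
apply/setP => [[f|f]]; rewrite !inE //=.
Qed.

Lemma closed_add (E V : finType) (ends : E -> V * V) (F : {set E}) e s :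
  closedF ends (F :\ e) s -> s (ends e).1 = s (ends e).2 -> closedF ends F s.
Proof.
move=> Hc He f Hf; case: (eqVneq f e) => [->//|Hne]; apply: Hc; by rewrite !inE Hne.
Qed.

Lemma closed_notin (E V : finType) (ends : E -> V * V) (F : {set E}) e s :
  closedF ends (F :\ e) s -> e \notin F -> closedF ends F s.
Proof.
move=> Hc He f Hf; apply: Hc; rewrite !inE Hf andbT; apply/eqP=> E'; by rewrite -E' Hf in He.
Qed.

Lemma subD1 (T : finType) (F : {set T}) e : F :\ e \subset F.
Proof. by apply/subsetP => x; rewrite !inE => /andP[]. Qed.

Lemma core (A B : {set E1}) (C D : {set E2}) :
  [disjoint A & B] -> A :|: B = setT -> spanning_tree ends1 A -> spanning_tree ends1 B ->
  [disjoint C & D] -> C :|: D = setT -> spanning_tree ends2 C -> spanning_tree ends2 D ->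
  d1 \in A -> d2 \in C -> bispanning G.
Proof.
move=> hAB uAB [cA aA] [cB aB] hCD uCD [cC aC] [cD aD] dA dC.
have d1B : d1 \notin B by rewrite (disjointFr hAB dA).
have d2D : d2 \notin D by rewrite (disjointFr hCD dC).
move/connectedP: cA => cA; move/connectedP: cB => cB.
move/connectedP: cC => cC; move/connectedP: cD => cD.
exists (gN A D), (gN B C); split.
- rewrite disjoint_subset; apply/subsetP => [[e|e]]; rewrite !inE /= => H.
    by rewrite (disjointFr hAB H).
  by rewrite (disjointFl hCD H).
- apply/setP => [[e|e]]; rewrite !inE /=.
    have : val e \in A :|: B by rewrite uAB inE.
    by rewrite inE.
  have : val e \in C :|: D by rewrite uCD inE.
  by rewrite inE orbC.
- split.
  + apply/connectedP => S HS.
    have [H1 H2] := closed_restr HS.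
    have c2 := cD _ (closed_notin H2 d2D).
    have c1 : forall u v, S (inl u) = S (inl v).
      apply: cA; apply: (closed_add H1).
      by rewrite -glue_x -glue_y; apply: c2.
    have key : forall x, S x = S (inl (ends1 d1).1).
      case=> [v|w]; first by apply: c1.
      by rewrite -glue_inr -glue_x; apply: c2.
    by move=> u v; rewrite (key u) (key v).
  + apply: sep_acyclic => -[e|e]; rewrite inE /= => He.
      have [t [Htc Htn]] := acyclic_sep aA He.
      have Hxy : t (ends1 d1).1 = t (ends1 d1).2.
        by apply: Htc; rewrite !inE dA andbT eq_sym (valP e).
      exists (sfun t (fun _ => t (ends1 d1).1)); split => //.
      rewrite gN_D1l; apply: closed_lift => //.
      exact: closedS (subD1 _ _) Htc.
    have [t [Htc Htn]] := acyclic_sep aD He.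
    have [r [Hrc Hrn]] := acyclic_sep aA dA.
    set s1 := fun v => if r v == r (ends1 d1).1 then t (sigma (ends1 d1).1) else t (sigma (ends1 d1).2).
    have E1' : s1 (ends1 d1).1 = t (sigma (ends1 d1).1) by rewrite /s1 eqxx.
    have E2' : s1 (ends1 d1).2 = t (sigma (ends1 d1).2) by rewrite /s1 eq_sym (negbTE Hrn).
    exists (sfun s1 t); split.
      rewrite gN_D1r; apply: closed_lift => //; last exact: closedS (subD1 _ _) Htc.
      by move=> f Hf; rewrite /s1 (Hrc f Hf).
    by rewrite /= !(sfun_glue E1' E2').
- split.
  + apply/connectedP => S HS.
    have [H1 H2] := closed_restr HS.
    have c1 := cB _ (closed_notin H1 d1B).
    have c2 : forall u v, S (gl u) = S (gl v).
      apply: cC; apply: (closed_add H2).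
      apply/eqP; rewrite -(sig_eq (fun w => S (gl w))) glue_x glue_y; apply/eqP; apply: c1.
    have key : forall x, S x = S (inl (ends1 d1).1).
      case=> [v|w]; first by apply: c1.
      by rewrite -glue_inr -glue_x; apply: c2.
    by move=> u v; rewrite (key u) (key v).
  + apply: sep_acyclic => -[e|e]; rewrite inE /= => He.
      have [t [Htc Htn]] := acyclic_sep aB He.
      have [r [Hrc Hrn]] := acyclic_sep aC dC.
      set s2 := fun w => if r w == r (sigma (ends1 d1).1) then t (ends1 d1).1 else t (ends1 d1).2.
      have E1' : t (ends1 d1).1 = s2 (sigma (ends1 d1).1) by rewrite /s2 eqxx.
      have E2' : t (ends1 d1).2 = s2 (sigma (ends1 d1).2).
        by rewrite /s2 eq_sym sig_eq (negbTE Hrn).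
      exists (sfun t s2); split => //.
      rewrite gN_D1l; apply: closed_lift => //; first exact: closedS (subD1 _ _) Htc.
      by move=> f Hf; rewrite /s2 (Hrc f Hf).
    have [t [Htc Htn]] := acyclic_sep aC He.
    have Hxy : t (sigma (ends1 d1).1) = t (sigma (ends1 d1).2).
      apply/eqP; rewrite sig_eq; apply/eqP; apply: Htc.
      by rewrite !inE dC andbT eq_sym (valP e).
    exists (sfun (fun _ => t (sigma (ends1 d1).1)) t); split.
      rewrite gN_D1r; apply: closed_lift => //; exact: closedS (subD1 _ _) Htc.
    have E1' : t (sigma (ends1 d1).1) = t (sigma (ends1 d1).1) by [].
    by rewrite /= !(sfun_glue E1' Hxy).
Qed.

End Glue.

Theorem mainTheorem9 (V1 E1 V2 E2 : finType)
  (ends1 : E1 -> V1 * V1) (ends2 : E2 -> V2 * V2)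
  (loop1 : loopless ends1) (loop2 : loopless ends2)
  (B1 : bispanning ends1) (B2 : bispanning ends2)
  (d1 : E1) (d2 : E2) (sigma : V1 -> V2)
  (Hsx : sigma (ends1 d1).1 \in [:: (ends2 d2).1; (ends2 d2).2])
  (Hsy : sigma (ends1 d1).2 \in [:: (ends2 d2).1; (ends2 d2).2])
  (Hsinj : sigma (ends1 d1).1 != sigma (ends1 d1).2) :
  bispanning (csum_ends ends1 ends2 d1 d2 sigma).
Proof.
case: B1 => A [B [hAB uAB tA tB]]; case: B2 => C [D [hCD uCD tC tD]].
have dAB : d1 \in A :|: B by rewrite uAB inE.
have dCD : d2 \in C :|: D by rewrite uCD inE.
have hBA : [disjoint B & A] by rewrite disjoint_sym.
have hDC : [disjoint D & C] by rewrite disjoint_sym.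
have uBA : B :|: A = setT by rewrite setUC.
have uDC : D :|: C = setT by rewrite setUC.
rewrite !inE in dAB dCD.
case/orP: dAB => dA; case/orP: dCD => dC.
- exact: (core Hsx Hsy Hsinj hAB uAB tA tB hCD uCD tC tD dA dC).
- exact: (core Hsx Hsy Hsinj hAB uAB tA tB hDC uDC tD tC dA dC).
- exact: (core Hsx Hsy Hsinj hBA uBA tB tA hCD uCD tC tD dA dC).
- exact: (core Hsx Hsy Hsinj hBA uBA tB tA hDC uDC tD tC dA dC).
Qed.
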